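(* Let $n\ge 2$, let $\Delta=\{1,2,\dots,n+1\}$ and let $P$ be a partition of $\{1,\dots,n+1\}$. Then there exists a strongly connected closed simplicial complex of type $\{3,4\}$ containing $\Delta$ as an $n$-face whose characteristic partition at $\Delta$ equals $P$, and any two such complexes are isomorphic by an isomorphism fixing each of $1,\dots,n+1$. Moreover, in any strongly connected closed simplicial complex of type $\{3,4\}$, the characteristic partitions at any two $n$-faces have the same multiset of part sizes.
   Context: An (abstract) simplicial complex of dimension $n$ is a family of finite nonempty sets closed under taking nonempty subsets and under nonempty intersections, whose maximal members (the $n$-faces or facets) all have cardinality $n+1$; a $k$-face is a member of cardinality $k+1$. It is closed if every $(n-1)$-face lies in exactly two $n$-faces. It is strongly connected if any two $n$-faces can be joined by a sequence of $n$-faces in which consecutive ones share an $(n-1)$-face. For an $(n-2)$-face $F$, every $n$-face $F'\supseteq F$ is $F\cup e$ for a unique $2$-set $e$; the link of $F$ is the graph formed by these edges $e$. A closed simplicial complex is of type $\{3,4\}$ if every $(n-2)$-face lies in exactly $3$ or $4$ $n$-faces (then its link is a single cycle of length $l(F)\in\{3,4\}$). Characteristic partition: in a closed complex of type $\{3,4\}$, let $\Delta=\{v_1,\dots,v_{n+1}\}$ be an $n$-face; for each $i$ let $\Delta_i$ be the unique $n$-face other than $\Delta$ containing $\Delta\setminus\{v_i\}$ and let $v_i'$ be the vertex of $\Delta_i$ not in $\Delta$. Declare $i\sim j$ iff $i=j$ or $v_i'=v_j'$ (equivalently $l(\Delta\setminus\{v_i,v_j\})=3$); this is an equivalence relation on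 $\{1,\dots,n+1\}$ and its classes form the characteristic partition at $\Delta$. Two complexes are isomorphic if there is a bijection between their vertex sets mapping faces exactly onto faces. *)

(* Defs.v *)
From mathcomp Require Import all_boot.
From mathcomp Require Import finmap.
From Stdlib Require Import Relations.Relation_Operators.

Set Implicit Arguments.
Unset Strict Implicit.
Unset Printing Implicit Defensive.

Local Open Scope fset_scope.

Section Complexes.
Variable V : choiceType.
Implicit Types (K : {fset V} -> Prop) (F G : {fset V}).

Definition is_complex (n : nat) K : Prop :=
  [/\ forall F, K F -> F != fset0,
      forall F G, K F -> G `<=` F -> G != fset0 -> K G,
      forall F G, K F -> K G -> F `&` G != fset0 -> K (F `&` G),
      forall F, K F -> #|` F| <= n.+1 &
      forall F, K F -> exists2 G, K G & (F `<=` G) && (#|` G| == n.+1)].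

Definition facet (n : nat) K F : Prop := K F /\ #|` F| = n.+1.

Definition nfacets_containing (n : nat) K F (k : nat) : Prop :=
  exists S : {fset {fset V}},
    (forall G, G \in S <-> (facet n K G /\ F `<=` G)) /\ #|` S| = k.

Definition closed_complex (n : nat) K : Prop :=
  is_complex n K /\
  forall F, K F -> #|` F| = n -> nfacets_containing n K F 2.

Definition type34 (n : nat) K : Prop :=
  closed_complex n K /\
  forall F, K F -> #|` F| = n.-1 ->
    nfacets_containing n K F 3 \/ nfacets_containing n K F 4.

Definition adjacent (n : nat) K F G : Prop :=
  facet n K F /\ facet n K G /\ #|` (F `&` G)| = n.

Definition strongly_connected (n : nat) K : Prop :=
  forall F G, facet n K F -> facet n K G ->
    clos_refl_trans {fset V} (adjacent n K) F G.

Definition scc34 (n : nat) K : Prop := type34 n K /\ strongly_connected n K.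

Definition char_rel (n : nat) K (D : {fset V}) (v w : V) : Prop :=
  v = w \/
  exists x : V, x \notin D /\
    facet n K ((D `\ v) `|` [fset x]) /\ facet n K ((D `\ w) `|` [fset x]).

Definition is_char_partition (n : nat) K (D : {fset V}) (P : {fset {fset V}}) : Prop :=
  forall B, B \in P <->
    exists2 v, v \in D & forall w, w \in B <-> (w \in D /\ char_rel n K D v w).

Definition is_partition (D : {fset V}) (P : {fset {fset V}}) : Prop :=
  [/\ forall B, B \in P -> B != fset0,
      forall B C, B \in P -> C \in P -> B != C -> B `&` C = fset0 &
      forall v, v \in D <-> exists2 B, B \in P & v \in B].

Definition vert K (v : V) : Prop := K [fset v].

End Complexes.

Definition complex_iso (V1 V2 : choiceType) (K1 : {fset V1} -> Prop)
  (K2 : {fset V2} -> Prop) (f : V1 -> V2) : Prop :=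
  [/\ forall x, vert K1 x -> vert K2 (f x),
      forall x y, vert K1 x -> vert K1 y -> f x = f y -> x = y,
      forall y, vert K2 y -> exists2 x, vert K1 x & f x = y &
      forall F : {fset V1}, (forall x, x \in F -> vert K1 x) ->
        (K1 F <-> K2 [fset f x | x in F])].

Definition Delta (n : nat) : {fset nat} := [fset i | i in iota 1 n.+1].

(* Main.v *)
Require Import Defs.
From mathcomp Require Import all_boot.
From mathcomp Require Import finmap zify.
From Stdlib Require Import ClassicalEpsilon Classical.
From Stdlib Require Import Relations.Relation_Operators.
Set Implicit Arguments.
Unset Strict Implicit.
Unset Printing Implicit Defensive.
Local Open Scope fset_scope.

Lemma fsub_eq (T : choiceType) (A B : {fset T}) :
  A `<=` B -> #|` B| <= #|` A| -> A = B.
Proof. by move=> h1 h2; apply/eqP; rewrite eqEfcard h1 h2. Qed.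

Lemma card_addx (T : choiceType) (A : {fset T}) x :
  x \notin A -> #|` (A `|` [fset x])| = (#|` A|).+1.
Proof. by move=> hx; rewrite fsetUC cardfsU1 hx add1n. Qed.

Lemma neq_mem (T : choiceType) (A B : {fset T}) x :
  x \in A -> x \notin B -> A != B.
Proof. by move=> h1 h2; apply/negP=> /eqP E; move: h2; rewrite -E h1. Qed.

Lemma neq_mem' (T : choiceType) (A B : {fset T}) x :
  x \notin A -> x \in B -> A != B.
Proof. by move=> h1 h2; rewrite eq_sym; apply: neq_mem h2 h1. Qed.

Lemma eq_sym_neq (T : eqType) (a b : T) : a != b -> b != a.
Proof. by rewrite eq_sym. Qed.

Lemma fcardD1 (T : choiceType) (A : {fset T}) x :
  x \in A -> #|` A| = (#|` (A `\ x)|).+1.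
Proof. by move=> hx; rewrite (cardfsD1 x) hx. Qed.

Lemma nin_neq (T : eqType) (D : pred T) a b : a \notin D -> b \in D -> (a == b) = false.
Proof. by move=> h1 h2; apply/eqP=> E; rewrite E h2 in h1. Qed.
Lemma nin_neq' (T : eqType) (D : pred T) a b : a \notin D -> b \in D -> (b == a) = false.
Proof. by move=> h1 h2; rewrite eq_sym (nin_neq h1 h2). Qed.

Ltac zcase z := repeat (match goal with |- context [z == ?a] =>
  let H := fresh "H" in case: (z =P a) => [->|/eqP H]; [|rewrite ?(negbTE H)] end).
Ltac bsolve := repeat match goal with
 | |- context [?a == ?a] => rewrite eqxx
 | H : is_true (?a != ?b) |- context [?a == ?b] => rewrite (negbTE H)
 | H : is_true (?a != ?b) |- context [?b == ?a] => rewrite [b == a]eq_sym (negbTE H)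
 | H : is_true (?a \in ?D) |- context [?a \in ?D] => rewrite H
 | H : is_true (?a \notin ?D) |- context [?a \in ?D] => rewrite (negbTE H)
 | H1 : is_true (?a \notin ?D), H2 : is_true (?b \in ?D) |- context [?a == ?b] =>
     rewrite (nin_neq H1 H2)
 | H1 : is_true (?a \notin ?D), H2 : is_true (?b \in ?D) |- context [?b == ?a] =>
     rewrite (nin_neq' H1 H2)
 end.
Ltac bfin := rewrite /= ?andbT ?andbF ?orbT ?orbF ?andTb ?andFb ?orTb ?orFb //=.
Ltac msolve := rewrite ?inE; bsolve; bfin.
Ltac ssolve := let z := fresh "z" in apply/fsubsetP => z; apply/implyP; rewrite !inE; zcase z; bsolve;
  bfin; try by do ?case: (z \in _).
Ltac fsolve := let z := fresh "z" in apply/fsetP => z; rewrite !inE; zcase z; bsolve;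
  rewrite /= ?andbT ?andbF ?orbT ?orbF //=; try by do ?case: (z \in _).

Section Gen.
Variable V : choiceType.
Variable n : nat.
Hypothesis hn : 2 <= n.
Variable K : {fset V} -> Prop.
Hypothesis HK : type34 n K.

Lemma cxK : is_complex n K. Proof. by case: HK => [[]]. Qed.

Lemma face_sub F G : K F -> G `<=` F -> G != fset0 -> K G.
Proof. by case: cxK => _ h _ _ _; apply: h. Qed.

Lemma nf_le F k (s : seq {fset V}) : nfacets_containing n K F k -> uniq s ->
  (forall G, G \in s -> facet n K G /\ F `<=` G) -> size s <= k.
Proof.
move=> [S [HS <-]] us Hs; apply: uniq_leq_size => // G /Hs /HS //.
Qed.

Lemma nf_other F k (s : seq {fset V}) : nfacets_containing n K F k -> size s < k ->
  exists G, [/\ facet n K G, F `<=` G & G \notin s].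
Proof.
move=> [S [HS eS]] hs.
case: (boolP (all (fun G => G \in s) S)) => [/allP al|/allPn [G GS Gs]].
  by have := uniq_leq_size (fset_uniq S) al; rewrite eS leqNgt hs.
by have [h1 h2] := (HS G).1 GS; exists G.
Qed.

Lemma facet_minus D v : facet n K D -> v \in D ->
  K (D `\ v) /\ #|` (D `\ v)| = n.
Proof.
move=> [KD cD] vD; have c : #|` (D `\ v)| = n by move: cD; rewrite (fcardD1 vD) => -[].
split=> //; apply: face_sub KD _ _; first exact: fsubsetDl.
by rewrite -cardfs_gt0 c; apply: leq_trans hn.
Qed.

Definition opp (D : {fset V}) (v : V) : V :=
  epsilon (inhabits v) (fun x => x \notin D /\ facet n K (D `\ v `|` [fset x])).

Lemma opp_ex D v : facet n K D -> v \in D ->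
  exists x, x \notin D /\ facet n K (D `\ v `|` [fset x]).
Proof.
move=> fD vD; have [KDv cDv] := facet_minus fD vD.
have [G [fG sG GD]] := nf_other (s := [:: D]) (HK.1.2 _ KDv cDv) isT.
have : ~~ (G `<=` D `\ v).
  by apply/negP=> /fsubset_leq_card; rewrite cDv fG.2 ltnn.
case/fsubsetPn=> x xG xDv; exists x.
have E : D `\ v `|` [fset x] = G.
  apply: fsub_eq; first by rewrite fsubUset sG fsub1set xG.
  by rewrite card_addx // cDv fG.2.
have xv : x != v.
  apply/negP=> /eqP xv; move: GD; rewrite inE -E xv.
  by rewrite fsetUC fsetD1K // eqxx.
split; last by rewrite E.
by move: xDv; rewrite !inE xv.
Qed.

Lemma opp_spec D v : facet n K D -> v \in D ->
  opp D v \notin D /\ facet n K (D `\ v `|` [fset opp D v]).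
Proof.
move=> fD vD; exact: (epsilon_spec (inhabits v)
  (fun x => x \notin D /\ facet n K (D `\ v `|` [fset x])) (opp_ex fD vD)).
Qed.

Lemma facet_uniq2 D v G1 G2 : facet n K D -> v \in D -> facet n K G1 -> facet n K G2 ->
  D `\ v `<=` G1 -> D `\ v `<=` G2 -> G1 != D -> G2 != D -> G1 = G2.
Proof.
move=> fD vD f1 f2 s1 s2 n1 n2; have [KDv cDv] := facet_minus fD vD.
apply/eqP/negPn/negP=> n12.
have : size [:: D; G1; G2] <= 2.
  apply: nf_le (HK.1.2 _ KDv cDv) _ _.
    by rewrite /= !inE !negb_or eq_sym n1 eq_sym n2 n12.
  move=> G; rewrite !inE => /orP[/eqP->|/orP[]/eqP->] //.
  by split=> //; apply: fsubsetDl.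
by [].
Qed.

Lemma opp_uniq D v x : facet n K D -> v \in D -> x \notin D ->
  facet n K (D `\ v `|` [fset x]) -> x = opp D v.
Proof.
move=> fD vD xD fx; have [oD fo] := opp_spec fD vD.
have := facet_uniq2 fD vD fx fo (fsubsetUl _ _) (fsubsetUl _ _).
rewrite (@neq_mem _ _ _ x) ?(@neq_mem _ _ _ (opp D v)) ?inE ?eqxx ?orbT //.
move=> /(_ isT isT) E; have : x \in D `\ v `|` [fset opp D v] by rewrite -E !inE eqxx orbT.
by rewrite !inE (negbTE xD) andbF /= => /eqP.
Qed.

Lemma adj_eq D u G : facet n K D -> u \in D -> facet n K G -> D `\ u `<=` G ->
  G != D -> G = D `\ u `|` [fset opp D u].
Proof.
move=> fD uD fG sG GD; have [oD fo] := opp_spec fD uD.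
apply: facet_uniq2 fD uD fG fo sG (fsubsetUl _ _) GD _.
by rewrite (@neq_mem _ _ _ (opp D u)) ?inE ?eqxx ?orbT.
Qed.

End Gen.


Section Gen2.
Variable V : choiceType.
Variable n : nat.
Hypothesis hn : 2 <= n.
Variable K : {fset V} -> Prop.
Hypothesis HK : type34 n K.

Local Notation opp := (opp n K).

Lemma sq_y D v w : facet n K D -> v \in D -> w \in D -> v != w -> opp D v != opp D w ->
  opp (D `\ v `|` [fset opp D v]) w \notin D.
Proof.
move=> fD vD wD vw oo.
have [xvD fDv] := opp_spec hn HK fD vD.
have wDv : w \in D `\ v `|` [fset opp D v] by rewrite !inE eq_sym vw wD.
have [yDv fG] := opp_spec hn HK fDv wDv.
set xv := opp D v in xvD fDv wDv yDv fG oo *.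
set y := opp _ w in yDv fG *.
apply/negP=> yD; have yv : y = v.
  by apply/eqP; move: yDv; rewrite !inE yD andbT; case: (y =P v).
have xw : xv != w by apply: contraNneq xvD => ->.
have E : (D `\ v `|` [fset xv]) `\ w `|` [fset y] = D `\ w `|` [fset xv].
  rewrite yv; fsolve.
move: fG; rewrite E => /(opp_uniq hn HK fD wD xvD) exw.
by rewrite exw eqxx in oo.
Qed.

End Gen2.

Section Gen3.
Variable V : choiceType.
Variable n : nat.
Hypothesis hn : 2 <= n.
Variable K : {fset V} -> Prop.
Hypothesis HK : type34 n K.

Local Notation opp := (opp n K).

Lemma square D v w : facet n K D -> v \in D -> w \in D -> v != w -> opp D v != opp D w ->
  facet n K (D `\ v `\ w `|` [fset opp D v; opp D w]).
Proof.
move=> fD vD wD vw oo.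
have [xvD fDv] := opp_spec hn HK fD vD.
have [xwD fDw] := opp_spec hn HK fD wD.
have wDv : w \in D `\ v `|` [fset opp D v] by rewrite !inE eq_sym vw wD.
have vDw : v \in D `\ w `|` [fset opp D w] by rewrite !inE vw vD.
have [yDv fG1] := opp_spec hn HK fDv wDv.
have [zDw fG2] := opp_spec hn HK fDw vDw.
have yD := sq_y hn HK fD vD wD vw oo.
have zD : opp (D `\ w `|` [fset opp D w]) v \notin D.
  by apply: (sq_y hn HK) => //; rewrite eq_sym.
set xv := opp D v in xvD fDv wDv yDv fG1 oo yD *.
set xw := opp D w in xwD fDw vDw zDw fG2 oo zD *.
set Dv := D `\ v `|` [fset xv] in fDv wDv yDv fG1 yD *.
set Dw := D `\ w `|` [fset xw] in fDw vDw zDw fG2 zD *.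
set y := opp Dv w in yDv fG1 yD *.
set z := opp Dw v in zDw fG2 zD *.
set G1 := Dv `\ w `|` [fset y] in fG1 *.
set G2 := Dw `\ v `|` [fset z] in fG2 *.
set F := D `\ v `\ w.
have cF : #|` F| = n.-1.
  have wDv' : w \in D `\ v by rewrite !inE eq_sym vw wD.
  by have := fD.2; rewrite (fcardD1 vD) (fcardD1 wDv') => -[] <-.
have KF : K F.
  apply: (face_sub HK) fD.1 _ _; first by ssolve.
  by rewrite -cardfs_gt0 cF -ltnS prednK ?(ltnW hn) //; apply: leq_trans hn.
have xvw : xv != xw := oo.
have vxv : v != xv by apply: contraNneq xvD => <-.
have wxw : w != xw by apply: contraNneq xwD => <-.
have vxw : v != xw by apply: contraNneq xwD => <-.
have wxv : w != xv by apply: contraNneq xvD => <-.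
have yv : y != v by apply: contraNneq yD => ->.
have zw : z != w by apply: contraNneq zD => ->.
have yw : y != w by apply: contraNneq yDv => ->.
have zv : z != v by apply: contraNneq zDw => ->.
have yxv : y != xv by apply: contraNneq yDv => ->; rewrite /Dv; msolve.
have zxw : z != xw by apply: contraNneq zDw => ->; rewrite /Dw; msolve.
have sD : F `<=` D by ssolve.
have sDv : F `<=` Dv by rewrite /Dv /F; ssolve.
have sDw : F `<=` Dw by rewrite /Dw /F; ssolve.
have sG1 : F `<=` G1 by rewrite /G1 /Dv /F; ssolve.
have sG2 : F `<=` G2 by rewrite /G2 /Dw /F; ssolve.
have n1 : D != Dv by apply: (@neq_mem' _ _ _ xv); rewrite /Dv; msolve.
have n2 : D != Dw by apply: (@neq_mem' _ _ _ xw); rewrite /Dw; msolve.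
have n3 : D != G1 by apply: (@neq_mem' _ _ _ y); rewrite /G1; msolve.
have n4 : Dv != Dw by apply: (@neq_mem _ _ _ xv); rewrite /Dv /Dw; msolve.
have n5 : Dv != G1 by apply: (@neq_mem' _ _ _ y); rewrite /G1; msolve.
have n6 : Dw != G1 by apply: (@neq_mem _ _ _ v); rewrite /G1 /Dw /Dv; msolve.
have m1 : D != G2 by apply: (@neq_mem' _ _ _ z); rewrite /G2; msolve.
have m2 : Dv != G2 by apply: (@neq_mem _ _ _ w); rewrite /G2 /Dw /Dv; msolve.
have m3 : Dw != G2 by apply: (@neq_mem' _ _ _ z); rewrite /G2; msolve.
have fs G : G \in [:: D; Dv; Dw; G1; G2] -> facet n K G /\ F `<=` G.
  by rewrite !inE => /orP[/eqP->|/orP[/eqP->|/orP[/eqP->|/orP[]/eqP->]]].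
have h4 : nfacets_containing n K F 4.
  case: (HK.2 F KF cF) => // h3.
  have := nf_le (s := [:: D; Dv; Dw; G1]) h3.
  rewrite /= !inE !negb_or n1 n2 n3 n4 n5 n6 => /(_ isT).
  by move=> /(_ _) h; have := h (fun G hG => fs G (mem_subseq (prefix_subseq [::D;Dv;Dw;G1] [::G2]) hG)).
have e12 : G1 = G2.
  apply/eqP; apply/negPn/negP => n7.
  have := nf_le (s := [:: D; Dv; Dw; G1; G2]) h4.
  rewrite /= !inE !negb_or n1 n2 n3 n4 n5 n6 m1 m2 m3 n7 => /(_ isT).
  by move=> /(_ fs).
have xwG : xw \in G1 by rewrite e12 /G2 /Dw; msolve.
have eyx : y = xw.
  move: xwG; rewrite /G1 /Dv; msolve; by move=> /eqP.
by move: fG1; rewrite /G1 /Dv eyx; congr (facet n K _); fsolve.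
Qed.

Lemma T1 D u : facet n K D -> u \in D ->
  opp (D `\ u `|` [fset opp D u]) (opp D u) = u.
Proof.
move=> fD uD; have [xD fD'] := opp_spec hn HK fD uD.
set xu := opp D u in xD fD' *.
have uxu : u != xu by apply: contraNneq xD => <-.
symmetry; apply: (opp_uniq hn HK fD'); first by msolve.
  by msolve.
have -> : (D `\ u `|` [fset xu]) `\ xu `|` [fset u] = D by fsolve.
exact: fD.
Qed.

Lemma T2 D u v : facet n K D -> u \in D -> v \in D -> v != u -> opp D v = opp D u ->
  opp (D `\ u `|` [fset opp D u]) v = u.
Proof.
move=> fD uD vD vu e; have [xD fD'] := opp_spec hn HK fD uD.
have [_ fDv] := opp_spec hn HK fD vD.
rewrite e in fDv.
set xu := opp D u in xD fD' fDv e *.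
have uxu : u != xu by apply: contraNneq xD => <-.
have vxu : v != xu by apply: contraNneq xD => <-.
symmetry; apply: (opp_uniq hn HK fD'); first by msolve.
  by msolve.
have -> : (D `\ u `|` [fset xu]) `\ v `|` [fset u] = D `\ v `|` [fset xu] by fsolve.
exact: fDv.
Qed.

Lemma T3 D u v : facet n K D -> u \in D -> v \in D -> v != u -> opp D v != opp D u ->
  opp (D `\ u `|` [fset opp D u]) v = opp D v.
Proof.
move=> fD uD vD vu e; have [xD fD'] := opp_spec hn HK fD uD.
have [xvD fDv] := opp_spec hn HK fD vD.
have sq := square fD uD vD (eq_sym_neq vu) (eq_sym_neq e).
set xu := opp D u in xD fD' e sq *.
set xv := opp D v in xvD fDv e sq *.
have uxu : u != xu by apply: contraNneq xD => <-.
have vxu : v != xu by apply: contraNneq xD => <-.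
have uxv : u != xv by apply: contraNneq xvD => <-.
have vxv : v != xv by apply: contraNneq xvD => <-.
symmetry; apply: (opp_uniq hn HK fD'); first by msolve.
  by msolve.
have -> : (D `\ u `|` [fset xu]) `\ v `|` [fset xv] = D `\ u `\ v `|` [fset xu; xv] by fsolve.
exact: sq.
Qed.

Lemma char_iff D v w : facet n K D -> v \in D -> w \in D ->
  char_rel n K D v w <-> opp D v = opp D w.
Proof.
move=> fD vD wD; split.
  case=> [->//|[x [xD [f1 f2]]]].
  by rewrite -(opp_uniq hn HK fD vD xD f1) -(opp_uniq hn HK fD wD xD f2).
move=> e; right; have [xD f1] := opp_spec hn HK fD vD.
have [_ f2] := opp_spec hn HK fD wD.
by exists (opp D v); split=> //; split=> //; rewrite e.
Qed.

End Gen3.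


Lemma map_size_imfset (T : choiceType) (A : {fset {fset T}}) (F : {fset T} -> {fset T}) :
  {in A &, injective F} -> (forall C, C \in A -> #|` F C| = #|` C|) ->
  perm_eq [seq #|` B| | B <- A] [seq #|` B| | B <- F @` A].
Proof.
move=> Fi Fs.
have P : perm_eq (F @` A) [seq F x | x <- A] by apply: enum_imfset.
rewrite perm_sym (permPl (perm_map (fun B : {fset T} => #|` B|) P)) -map_comp.
have E : {in A, (fun B : {fset T} => #|` B|) \o F =1 (fun B : {fset T} => #|` B|)} by move=> C /Fs.
by move/eq_in_map: E => ->.
Qed.

Section Part3.
Variable V : choiceType.
Variable n : nat.
Hypothesis hn : 2 <= n.
Variable K : {fset V} -> Prop.
Hypothesis HK : type34 n K.

Local Notation opp := (opp n K).

Definition cls (D : {fset V}) v := [fset w in D | opp D w == opp D v].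
Definition classes (D : {fset V}) := [fset cls D v | v in D].

Lemma in_cls D v w : (w \in cls D v) = (w \in D) && (opp D w == opp D v).
Proof. by rewrite !inE. Qed.

Lemma char_classes D P : facet n K D -> is_char_partition n K D P -> P = classes D.
Proof.
move=> fD HP; apply/fsetP => B; apply/idP/idP.
  move=> /HP [v vD Hv]; apply/imfsetP; exists v => //=.
  apply/fsetP => w; rewrite in_cls; apply/idP/idP.
    move=> /Hv [wD /(char_iff hn HK fD vD wD) e]; by rewrite wD e eqxx.
  by move=> /andP[wD /eqP e]; apply/Hv; split=> //; apply/(char_iff hn HK fD vD wD).
move=> /imfsetP [v /= vD ->]; apply/HP; exists v => // w; rewrite in_cls.
split.
  by move=> /andP[wD /eqP e]; split=> //; apply/(char_iff hn HK fD vD wD).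
by move=> [wD /(char_iff hn HK fD vD wD) e]; rewrite wD e eqxx.
Qed.

Lemma transport_classes (D D' : {fset V}) (phi psi : V -> V) :
  {in D &, injective phi} -> D' = phi @` D ->
  (forall w1 w2, w1 \in D -> w2 \in D -> psi (opp D w1) = psi (opp D w2) -> opp D w1 = opp D w2) ->
  (forall w, w \in D -> opp D' (phi w) = psi (opp D w)) ->
  perm_eq [seq #|` B| | B <- classes D] [seq #|` B| | B <- classes D'].
Proof.
move=> phii eD' psii ho.
have c1 v : v \in D -> cls D' (phi v) = phi @` cls D v.
  move=> vD; apply/fsetP => x; rewrite in_cls; apply/idP/idP.
    move=> /andP[]; rewrite eD' => /imfsetP [w /= wD ->].
    rewrite -eD' !ho // => /eqP /psii e; apply/imfsetP; exists w => //.
    by rewrite in_cls wD e // eqxx.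
  move=> /imfsetP [w /=]; rewrite in_cls => /andP [wD /eqP e] ->.
  by rewrite eD' in_imfset //= -eD' !ho // e eqxx.
pose Phi := fun C : {fset V} => phi @` C.
have c2 : classes D' = Phi @` classes D.
  apply/fsetP => B; apply/imfsetP/imfsetP => /=.
    case=> v1 + ->; rewrite {1}eD' => /imfsetP [v2 /= v2D ->].
    by exists (cls D v2); [apply/imfsetP; exists v2|rewrite c1].
  case=> C /imfsetP [v2 /= v2D ->] ->.
  by exists (phi v2); [rewrite eD' in_imfset|rewrite c1].
have sub C : C \in classes D -> C `<=` D.
  by move=> /imfsetP [v /= vD ->]; apply/fsubsetP => w; rewrite in_cls => /andP[].
have c3 : {in classes D &, injective Phi}.
  move=> C1 C2 h1 h2; rewrite /Phi => e; apply/fsetP => x.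
  wlog : C1 C2 h1 h2 e / x \in C1.
    move=> W; apply/idP/idP => h; first by rewrite -(W _ _ h1 h2 e h) h.
    by rewrite -(W _ _ h2 h1 (esym e) h) h.
  move=> xC1; rewrite xC1; symmetry.
  have : phi x \in phi @` C2 by rewrite -e in_imfset.
  case/imfsetP => y /= yC2 exy.
  by rewrite (phii _ _ (fsubsetP (sub _ h1) _ xC1) (fsubsetP (sub _ h2) _ yC2) exy).
rewrite c2; apply: map_size_imfset => // C hC.
rewrite /Phi card_in_imfset //.
by move=> a b ha hb; apply: phii; apply: (fsubsetP (sub _ hC)).
Qed.

Lemma adj_flip D G : adjacent n K D G -> exists2 u, u \in D & G = D `\ u `|` [fset opp D u].
Proof.
move=> [fD [fG cI]].
have : ~~ (D `<=` G).
  apply/negP=> sDG; move: cI; have -> : D `&` G = D.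
    by apply/fsetP => z; rewrite inE; case: (boolP (z \in D)) => // /(fsubsetP sDG) ->.
  by rewrite fD.2 => /eqP; rewrite -[n.+1]addn1 -{2}[n]addn0 eqn_add2l.
case/fsubsetPn => u uD uG; exists u => //.
have [_ cDu] := facet_minus hn HK fD uD.
have sI : D `&` G `<=` D `\ u.
  apply/fsubsetP => z; rewrite !inE => /andP[zD zG]; rewrite zD andbT.
  by apply: contraNneq uG => <-.
have eI : D `&` G = D `\ u by apply: fsub_eq sI _; rewrite cDu cI.
apply: (adj_eq hn HK fD uD fG).
  by rewrite -eI; apply: fsubsetIr.
by rewrite eq_sym; apply: (neq_mem uD uG).
Qed.

Lemma flip_perm D u : facet n K D -> u \in D ->
  perm_eq [seq #|` B| | B <- classes D] [seq #|` B| | B <- classes (D `\ u `|` [fset opp D u])].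
Proof.
move=> fD uD; have [xD _] := opp_spec hn HK fD uD.
set xu := opp D u in xD *.
have uxu : u != xu by apply: contraNneq xD => <-.
pose phi w := if w == u then xu else w.
pose psi y := if y == xu then u else y.
apply: (transport_classes (phi := phi) (psi := psi)).
- move=> w1 w2 h1 h2; rewrite /phi.
  case: (w1 =P u) => [->|n1]; case: (w2 =P u) => [->|n2] //.
    by move=> e; move: h2; rewrite -e (negbTE xD).
  by move=> e; move: h1; rewrite e (negbTE xD).
- apply/fsetP => z; rewrite !inE; apply/idP/idP.
    case/orP=> [/andP[zu zD]|/eqP ->].
      by apply/imfsetP; exists z => //; rewrite /phi (negbTE zu).
    by apply/imfsetP; exists u => //; rewrite /phi eqxx.
  case/imfsetP => w /= wD ->; rewrite /phi; case: (w =P u) => [_|/eqP wu].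
    by rewrite eqxx orbT.
  by rewrite wu wD.
- move=> w1 w2 h1 h2; have [o1 _] := opp_spec hn HK fD h1; have [o2 _] := opp_spec hn HK fD h2.
  rewrite /psi; case: (opp D w1 =P xu) => [e1|n1]; case: (opp D w2 =P xu) => [e2|n2].
  + by rewrite e1 e2.
  + by move=> e; move: o2; rewrite -e uD.
  + by move=> e; move: o1; rewrite e uD.
  + by [].
- move=> w wD; rewrite /phi /psi; case: (w =P u) => [->|/eqP wu].
    by rewrite (T1 hn HK fD uD) eqxx.
  case: (opp D w =P xu) => [e|/eqP ne].
    by apply: (T2 hn HK fD uD wD wu).
  by apply: (T3 hn HK fD uD wD wu).
Qed.

Lemma part3_gen D1 D2 P1 P2 : strongly_connected n K -> facet n K D1 -> facet n K D2 ->
  is_char_partition n K D1 P1 -> is_char_partition n K D2 P2 ->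
  perm_eq [seq #|` B| | B <- P1] [seq #|` B| | B <- P2].
Proof.
move=> SC f1 f2 c1 c2; rewrite (char_classes f1 c1) (char_classes f2 c2).
suff key : forall x y, clos_refl_trans {fset V} (adjacent n K) x y -> facet n K x ->
    facet n K y /\ perm_eq [seq #|` B| | B <- classes x] [seq #|` B| | B <- classes y].
  by have [] := key _ _ (SC _ _ f1 f2) f1.
move=> x y; elim=> {x y} [x y adj|x|x y z _ IH1 _ IH2] fx.
- split; first by case: adj => _ [].
  have [u uD ->] := adj_flip adj; exact: flip_perm.
- by split=> //; exact: perm_refl.
- have [fy p1] := IH1 fx; have [fz p2] := IH2 fy.
  by split=> //; apply: perm_trans p1 p2.
Qed.
End Part3.


Section Part2.
Variable V : choiceType.
Variable n : nat.
Hypothesis hn : 2 <= n.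
Variables K1 K2 : {fset V} -> Prop.
Hypothesis HK1 : type34 n K1.
Hypothesis HK2 : type34 n K2.
Variable D : {fset V}.
Hypothesis fD1 : facet n K1 D.
Hypothesis fD2 : facet n K2 D.
Variable f : V -> V.
Hypothesis fid : forall v, v \in D -> f v = v.
Hypothesis fX : forall v, v \in D -> f (opp n K1 D v) = opp n K2 D v.
Definition W1 y := y \in D \/ exists2 v, v \in D & y = opp n K1 D v.
Hypothesis finj : forall a b, W1 a -> W1 b -> f a = f b -> a = b.

Definition Inv G := [/\ facet n K1 G, facet n K2 (f @` G), (forall y, y \in G -> W1 y) &
  forall v, v \in G -> W1 (opp n K1 G v) /\ f (opp n K1 G v) = opp n K2 (f @` G) (f v)].

Lemma Inv_D : Inv D.
Proof.
have eD : f @` D = D.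
  apply/fsetP => z; apply/imfsetP/idP => [[w /= wD ->]|zD]; first by rewrite fid.
  by exists z => //; rewrite fid.
split; rewrite ?eD //; first by move=> y yD; left.
move=> v vD; split; first by right; exists v.
by rewrite fX // fid.
Qed.

Lemma Inv_step G G' : Inv G -> adjacent n K1 G G' -> Inv G'.
Proof.
move=> [f1 f2 WG oG] adj; have [u uG eG'] := adj_flip hn HK1 adj.
have [xG fx1] := opp_spec hn HK1 f1 uG.
set x := opp n K1 G u in xG fx1 eG' *.
have [Wx fxe] := oG _ uG; rewrite -/x in Wx fxe.
set H := f @` G in f2 fxe oG *.
have fuH : f u \in H by rewrite in_imfset.
have [oH fH'] := opp_spec hn HK2 f2 fuH.
have Wu := WG _ uG.
have ux : u != x by apply: contraNneq xG => <-.
have eH : f @` G' = H `\ f u `|` [fset opp n K2 H (f u)].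
  rewrite eG' -fxe; apply/fsetP => z; rewrite !inE; apply/imfsetP/idP.
    case=> w /=; rewrite !inE => /orP[/andP[wu wG] ->|/eqP -> ->]; last by rewrite eqxx orbT.
    rewrite /H in_imfset // andbT; apply/orP; left; apply: (contraNneq _ wu) => e.
    by apply/eqP; apply: finj (WG _ wG) Wu e.
  case/orP => [/andP[zfu /imfsetP [w /= wG ezw]]|/eqP ->].
    exists w => //; rewrite !inE wG andbT; apply/orP; left.
    by apply: (contraNneq _ zfu) => e; rewrite ezw e.
  by exists x => //; rewrite !inE eqxx orbT.
split.
- by rewrite eG'.
- by rewrite eH.
- by move=> y; rewrite eG' !inE => /orP[/andP[_ /WG]|/eqP ->].
move=> v vG'; move: (vG'); rewrite {1}eG' !inE => /orP[/andP[vu vG]|/eqP ev]; last first.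
  rewrite ev eG' (T1 hn HK1 f1 uG) -/x -eG'; split=> //.
  by rewrite eH fxe (T1 hn HK2 f2 fuH).
have [Wv fve] := oG _ vG.
have fvH : f v \in H by rewrite in_imfset.
have fvu : f v != f u.
  by apply: (contraNneq _ vu) => e; apply/eqP; apply: finj (WG _ vG) Wu e.
case: (opp n K1 G v =P x) => [e|/eqP ne].
  rewrite eG' (T2 hn HK1 f1 uG vG vu e) -eG'; split=> //.
  rewrite eH (T2 hn HK2 f2 fuH fvH fvu) //.
  by rewrite -fve -fxe e.
rewrite eG' (T3 hn HK1 f1 uG vG vu ne) -eG'; split=> //.
rewrite eH (T3 hn HK2 f2 fuH fvH fvu) //.
rewrite -fve -fxe; apply: (contraNneq _ ne) => e; apply/eqP.
by apply: finj Wv Wx e.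
Qed.

Lemma transport_facets : strongly_connected n K1 ->
  forall G, facet n K1 G -> facet n K2 (f @` G) /\ (forall y, y \in G -> W1 y).
Proof.
move=> SC G fG.
suff key : forall x y, clos_refl_trans {fset V} (adjacent n K1) x y -> Inv x -> Inv y.
  by have [] := key _ _ (SC _ _ fD1 fG) Inv_D.
move=> x y; elim=> {x y} [x y adj|x|x y z _ IH1 _ IH2] Ix.
- exact: Inv_step Ix adj.
- exact: Ix.
- exact: IH2 (IH1 Ix).
Qed.


Lemma face_tr : strongly_connected n K1 -> forall F, K1 F -> K2 (f @` F).
Proof.
move=> SC F KF; have [_ _ _ _ ex] := cxK HK1.
have [ne _ _ _ _] := cxK HK1.
have [G KG /andP[sFG /eqP cG]] := ex F KF.
have [fG _] := transport_facets SC (conj KG cG).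
apply: (face_sub HK2 fG.1).
  by apply/fsubsetP => z /imfsetP [w /= wF ->]; rewrite in_imfset // (fsubsetP sFG).
have /fset0Pn [w wF] := ne _ KF.
by apply/fset0Pn; exists (f w); rewrite in_imfset.
Qed.

Lemma vert_W : strongly_connected n K1 -> forall x, vert K1 x -> W1 x.
Proof.
move=> SC x Kx; have [_ _ _ _ ex] := cxK HK1.
have [G KG /andP[sFG /eqP cG]] := ex _ Kx.
have [_ WG] := transport_facets SC (conj KG cG).
by apply: WG; apply: (fsubsetP sFG); rewrite inE.
Qed.

End Part2.

Section TrMap.
Variable V : choiceType.
Variable D : {fset V}.
Variables X Y : V -> V.

Definition trmap (y : V) : V :=
  if y \in D then y else
  match [seq v <- D | X v == y] with v :: _ => Y v | [::] => y end.

Hypothesis XD : forall v, v \in D -> X v \notin D.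
Hypothesis hXY : forall v w, v \in D -> w \in D -> X v = X w -> Y v = Y w.

Lemma trmap_D v : v \in D -> trmap v = v.
Proof. by rewrite /trmap => ->. Qed.

Lemma trmap_X v : v \in D -> trmap (X v) = Y v.
Proof.
move=> vD; rewrite /trmap (negbTE (XD vD)).
have : v \in [seq w <- D | X w == X v] by rewrite mem_filter eqxx vD.
case E : [seq w <- D | X w == X v] => [//|w s] _.
have : w \in [seq w <- D | X w == X v] by rewrite E inE eqxx.
by rewrite mem_filter => /andP[/eqP e wD]; apply: hXY.
Qed.
End TrMap.


Lemma classes_eq_opp (V : choiceType) n (hn : 2 <= n) (K1 K2 : {fset V} -> Prop) D :
  classes n K1 D = classes n K2 D -> forall v w, v \in D -> w \in D ->
  opp n K1 D v = opp n K1 D w -> opp n K2 D v = opp n K2 D w.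
Proof.
move=> E v w vD wD e.
have : cls n K1 D v \in classes n K1 D by rewrite in_imfset.
rewrite E => /imfsetP [v' /= v'D e'].
have : v \in cls n K1 D v by rewrite in_cls vD eqxx.
have : w \in cls n K1 D v by rewrite in_cls wD e eqxx.
rewrite e' !in_cls => /andP[_ /eqP ->] /andP[_ /eqP ->] //.
Qed.

Lemma part2_gen (V : choiceType) n (hn : 2 <= n) (D : {fset V}) P (K1 K2 : {fset V} -> Prop) :
  scc34 n K1 -> facet n K1 D -> is_char_partition n K1 D P ->
  scc34 n K2 -> facet n K2 D -> is_char_partition n K2 D P ->
  exists f : V -> V, complex_iso K1 K2 f /\ (forall i, i \in D -> f i = i).
Proof.
move=> [HK1 SC1] fD1 c1 [HK2 SC2] fD2 c2.
have E12 : classes n K1 D = classes n K2 D.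
  by rewrite -(char_classes hn HK1 fD1 c1) -(char_classes hn HK2 fD2 c2).
set X1 := opp n K1 D; set X2 := opp n K2 D.
have X1D v : v \in D -> X1 v \notin D by move=> vD; case: (opp_spec hn HK1 fD1 vD).
have X2D v : v \in D -> X2 v \notin D by move=> vD; case: (opp_spec hn HK2 fD2 vD).
have h12 := classes_eq_opp hn E12.
have h21 := classes_eq_opp hn (esym E12).
pose f := trmap D X1 X2; pose g := trmap D X2 X1.
have fid v : v \in D -> f v = v by apply: trmap_D.
have gid v : v \in D -> g v = v by apply: trmap_D.
have fX v : v \in D -> f (X1 v) = X2 v by apply: trmap_X.
have gX v : v \in D -> g (X2 v) = X1 v by apply: trmap_X.
have gf a : W1 n K1 D a -> g (f a) = a.
  by case=> [aD|[v vD ->]]; [rewrite fid // gid | rewrite fX // gX].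
have fg a : W1 n K2 D a -> f (g a) = a.
  by case=> [aD|[v vD ->]]; [rewrite gid // fid | rewrite gX // fX].
have finj a b : W1 n K1 D a -> W1 n K1 D b -> f a = f b -> a = b.
  by move=> Wa Wb e; rewrite -(gf _ Wa) -(gf _ Wb) e.
have ginj a b : W1 n K2 D a -> W1 n K2 D b -> g a = g b -> a = b.
  by move=> Wa Wb e; rewrite -(fg _ Wa) -(fg _ Wb) e.
have FT := face_tr hn HK1 HK2 fD1 fD2 fid fX finj SC1.
have GT := face_tr hn HK2 HK1 fD2 fD1 gid gX ginj SC2.
have VW1 := vert_W hn HK1 HK2 fD1 fD2 fid fX finj SC1.
have VW2 := vert_W hn HK2 HK1 fD2 fD1 gid gX ginj SC2.
have vf x : vert K1 x -> vert K2 (f x).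
  by move=> /FT; rewrite /vert imfset_fset1.
have vg x : vert K2 x -> vert K1 (g x).
  by move=> /GT; rewrite /vert imfset_fset1.
exists f; split => //; split => //.
- by move=> x y /VW1 Wx /VW1 Wy; apply: finj.
- by move=> y Vy; exists (g y); [apply: vg | apply: fg; apply: VW2].
- move=> F FV; split; first exact: FT.
  move=> /GT; congr K1; apply/fsetP => z; apply/imfsetP/idP.
    by case=> w /= /imfsetP [x /= xF ->] ->; rewrite gf //; apply: VW1; apply: FV.
  by move=> zF; exists (f z); [rewrite in_imfset | rewrite gf //; apply: VW1; apply: FV].
Qed.


Lemma memD n y : (y \in Delta n) = (0 < y <= n.+1).
Proof. by rewrite /Delta !inE mem_iota; case: y => [|[|y]] //=. Qed.

Lemma cardDl n : #|` Delta n| = n.+1.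
Proof. by have := card_fseq (iota 1 n.+1); rewrite undup_id ?iota_uniq ?size_iota // => <-. Qed.

Lemma imS (T T' : choiceType) (f : T -> T') (A B : {fset T}) : A `<=` B -> f @` A `<=` f @` B.
Proof.
move=> s; apply/fsubsetP => z /imfsetP [x /= xA ->]; rewrite in_imfset //; exact: (fsubsetP s).
Qed.

Lemma leq_imf (T T' : choiceType) (f : T -> T') (A : {fset T}) : #|` f @` A| <= #|` A|.
Proof. exact: leq_imfset_card. Qed.

Lemma card_add2 (T : choiceType) (F : {fset T}) a b : a \notin F -> b \notin F -> a != b ->
  #|` (F `|` [fset a; b])| = (#|` F|).+2.
Proof.
move=> aF bF ab; rewrite fsetUA card_addx ?card_addx // !inE negb_or bF /=.
by rewrite eq_sym.
Qed.

Lemma eq_add1 (T : choiceType) (F G : {fset T}) a : #|` G| = (#|` F|).+1 -> F `<=` G ->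
  a \in G -> a \notin F -> G = F `|` [fset a].
Proof.
move=> cG sFG aG aF; symmetry; apply: fsub_eq.
  by rewrite fsubUset sFG fsub1set aG.
by rewrite card_addx // cG.
Qed.

Lemma eq_add2 (T : choiceType) (F G : {fset T}) a b : #|` G| = (#|` F|).+2 -> F `<=` G ->
  a \in G -> b \in G -> a \notin F -> b \notin F -> a != b -> G = F `|` [fset a; b].
Proof.
move=> cG sFG aG bG aF bF ab; symmetry; apply: fsub_eq.
  by rewrite fsubUset sFG; apply/fsubsetP => z; rewrite !inE => /orP[]/eqP->.
by rewrite card_add2 // cG.
Qed.

Lemma nf_list (V : choiceType) n (K : {fset V} -> Prop) F (s : seq {fset V}) : uniq s ->
  (forall G, G \in s <-> facet n K G /\ F `<=` G) -> nfacets_containing n K F (size s).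
Proof.
move=> us hs; exists [fset x in s]; split.
  by move=> G; rewrite in_fset; apply: hs.
by rewrite card_fseq undup_id.
Qed.

Section Model.
Variable n : nat.
Hypothesis hn : 2 <= n.
Variable P : {fset {fset nat}}.
Hypothesis HP : is_partition (Delta n) P.

Local Notation Dl := (Delta n).
Definition blk (v : nat) := find (fun B : {fset nat} => v \in B) P.
Definition Xm v := (n.+2 + blk v)%N.
Definition pim y := if y \in Dl then Xm y else y.
Definition Am := Xm @` Dl.
Definition Wm := Dl `|` Am.
Definition surj (S : {fset nat}) := Am `<=` pim @` S.
Definition MK (F : {fset nat}) : Prop := [/\ F != fset0, F `<=` Wm & surj (Wm `\` F)].

Lemma XnD v : Xm v \notin Dl.
Proof. by rewrite memD /Xm; apply/negP => /andP[_]; lia. Qed.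

Lemma AnD a : a \in Am -> a \notin Dl.
Proof. by case/imfsetP => v /= _ ->; apply: XnD. Qed.

Lemma pim_A a : a \in Am -> pim a = a.
Proof. by move=> aA; rewrite /pim (negbTE (AnD aA)). Qed.

Lemma pimW y : y \in Wm -> pim y \in Am.
Proof.
rewrite inE => /orP[yD|yA]; last by rewrite pim_A.
by rewrite /pim yD in_imfset.
Qed.

Lemma cardW : #|` Wm| = (n.+1 + #|` Am|)%N.
Proof.
rewrite /Wm cardfsU cardDl.
have -> : Dl `&` Am = fset0.
  apply/fsetP => z; rewrite in_fsetI in_fset0; apply/negP => /andP[zD /AnD]; by rewrite zD.
by rewrite cardfs0 subn0.
Qed.

Lemma pim_sub S : S `<=` Wm -> pim @` S `<=` Am.
Proof. by move=> s; apply/fsubsetP => z /imfsetP [y /= yS ->]; apply: pimW; apply: (fsubsetP s). Qed.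

Lemma surj_card S : surj S -> #|` Am| <= #|` S|.
Proof. by move=> h; apply: leq_trans (fsubset_leq_card h) (leq_imf _ _). Qed.

Lemma surj_rm S y y' : surj S -> y \in S -> y' \in S -> y != y' -> pim y = pim y' -> surj (S `\ y).
Proof.
move=> h yS y'S yy e; apply/fsubsetP => a /(fsubsetP h) /imfsetP [z /= zS ->].
case: (z =P y) => [->|/eqP zy].
  by rewrite e in_imfset // !inE eq_sym yy.
by rewrite in_imfset // !inE zy.
Qed.

Lemma coll_card S y y' : surj S -> y \in S -> y' \in S -> y != y' -> pim y = pim y' ->
  (#|` Am|).+1 <= #|` S|.
Proof.
move=> h yS y'S yy e; have := surj_card (surj_rm h yS y'S yy e).
by rewrite (fcardD1 yS).
Qed.

Lemma pigeon S : S `<=` Wm -> #|` Am| < #|` S| ->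
  exists y y', [/\ y \in S, y' \in S, y != y' & pim y = pim y'].
Proof.
move=> sW c; apply: NNPP => H.
have inj : {in S &, injective pim}.
  move=> a b ha hb e; apply: NNPP => ab; apply: H; exists a, b; split=> //.
  by apply/eqP.
have := fsubset_leq_card (pim_sub sW); rewrite card_in_imfset //.
by rewrite leqNgt c.
Qed.

Lemma cardWD F : F `<=` Wm -> #|` (Wm `\` F)| = (#|` Wm| - #|` F|)%N.
Proof. exact: cardfsDS. Qed.

Lemma MK_card F : MK F -> #|` F| <= n.+1.
Proof.
move=> [_ sF hs]; have := surj_card hs; rewrite cardWD // cardW.
have := fsubset_leq_card sF; rewrite cardW; lia.
Qed.

Lemma MK_add F T : MK F -> T `<=` Wm `\` F ->
  (forall t, t \in T -> exists2 s, s \in (Wm `\` F) `\` T & pim s = pim t) -> MK (F `|` T).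
Proof.
move=> [ne sF hs] sT hT; split.
- by case/fset0Pn: ne => z zF; apply/fset0Pn; exists z; rewrite in_fsetU zF.
- by rewrite fsubUset sF; apply: fsubset_trans sT (fsubsetDl _ _).
have -> : Wm `\` (F `|` T) = (Wm `\` F) `\` T by rewrite fsetDDl.
apply/fsubsetP => a /(fsubsetP hs) /imfsetP [z /= zS ->].
case: (boolP (z \in T)) => [zT|zT].
  by have [s sS <-] := hT _ zT; rewrite in_imfset.
by rewrite in_imfset // inE zT zS.
Qed.

Lemma facet_MK G : facet n MK G -> #|` (Wm `\` G)| = #|` Am|.
Proof.
by move=> [[_ sG _] cG]; rewrite cardWD // cardW cG; lia.
Qed.

Lemma no_coll G y y' : facet n MK G -> y \in Wm `\` G -> y' \in Wm `\` G -> y != y' ->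
  pim y = pim y' -> False.
Proof.
move=> fG yS y'S yy e; have [[_ _ hs] _] := fG; have := coll_card hs yS y'S yy e.
by rewrite facet_MK // ltnn.
Qed.


Lemma MK_add1 F y y' : MK F -> y \in Wm `\` F -> y' \in Wm `\` F -> y != y' -> pim y = pim y' ->
  MK (F `|` [fset y]).
Proof.
move=> hF yS y'S yy e; apply: MK_add => //.
  by rewrite fsub1set.
move=> t; rewrite inE => /eqP ->; exists y' => //.
by rewrite in_fsetD1 eq_sym yy y'S.
Qed.

Lemma MK_ext k F : (n.+1 - #|` F|)%N = k -> MK F -> exists G, [/\ MK G, F `<=` G & #|` G| = n.+1].
Proof.
elim: k F => [|k IH] F hk hF.
  exists F; split=> //; apply/eqP; rewrite eqn_leq MK_card //=.
  by move: hk => /eqP; rewrite subn_eq0.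
have [_ sF hs] := hF.
have : #|` Am| < #|` (Wm `\` F)|.
  by rewrite cardWD // cardW; move: hk; lia.
case/pigeon; first exact: fsubsetDl.
move=> y [y' [yS y'S yy e]].
have hF' := MK_add1 hF yS y'S yy e.
have yF : y \notin F by move: yS; rewrite in_fsetD => /andP[].
have e' : (n.+1 - #|` (F `|` [fset y])|)%N = k by rewrite card_addx //; move: hk; lia.
have [G [hG sG cG]] := IH _ e' hF'.
by exists G; split=> //; apply: fsubset_trans sG; apply: fsubsetUl.
Qed.

Lemma MK_cx : is_complex n MK.
Proof.
have hsub : forall F G, MK F -> G `<=` F -> G != fset0 -> MK G.
  move=> F G [ne sF hs] sGF nG; split=> //; first exact: fsubset_trans sGF sF.
  by apply: fsubset_trans hs _; apply: imS; apply: fsetDS.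
split.
- by move=> F [].
- exact: hsub.
- by move=> F G hF _ nI; apply: hsub hF _ nI; apply: fsubsetIl.
- exact: MK_card.
- move=> F hF; have [G [hG sG cG]] := MK_ext (erefl _) hF.
  by exists G => //; rewrite sG cG eqxx.
Qed.

Lemma inWF F y : (y \in Wm `\` F) = (y \in Wm) && (y \notin F).
Proof. by rewrite in_fsetD andbC. Qed.

Lemma MK_closed F : MK F -> #|` F| = n -> nfacets_containing n MK F 2.
Proof.
move=> hF cF; have [_ sF hs] := hF.
have : #|` Am| < #|` (Wm `\` F)| by rewrite cardWD // cardW cF; lia.
case/pigeon; first exact: fsubsetDl.
move=> y [y' [yS y'S yy e]].
have [yW yF] : y \in Wm /\ y \notin F by move: yS; rewrite inWF => /andP.
have [y'W y'F] : y' \in Wm /\ y' \notin F by move: y'S; rewrite inWF => /andP.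
have f1 : facet n MK (F `|` [fset y]).
  by split; [apply: MK_add1 yS y'S yy e | rewrite card_addx // cF].
have f2 : facet n MK (F `|` [fset y']).
  by split; [apply: MK_add1 y'S yS (eq_sym_neq yy) (esym e) | rewrite card_addx // cF].
have -> : 2 = size [:: F `|` [fset y]; F `|` [fset y']] by [].
apply: nf_list.
  rewrite /= inE andbT; apply: (@neq_mem' _ _ _ y').
    by rewrite in_fsetU in_fset1 (negbTE y'F) eq_sym (negbTE yy).
  by rewrite in_fsetU in_fset1 eqxx orbT.
move=> G; split.
  rewrite !inE => /orP[]/eqP-> ; split=> //; exact: fsubsetUl.
move=> [fG sFG]; have [[_ sG _] cG] := fG.
case: (boolP (y \in G)) => yG.
  by rewrite (eq_add1 (a := y) _ sFG) ?cG ?cF // inE eqxx.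
case: (boolP (y' \in G)) => y'G.
  by rewrite (eq_add1 (a := y') _ sFG) ?cG ?cF // !inE eqxx orbT.
exfalso; apply: (no_coll fG _ _ yy e); by rewrite inWF ?yW ?y'W.
Qed.


Lemma MK_add2 F x w s1 s2 : MK F -> x \in Wm `\` F -> w \in Wm `\` F ->
  s1 \in Wm `\` F -> s2 \in Wm `\` F -> s1 \notin [fset x; w] -> s2 \notin [fset x; w] ->
  pim s1 = pim x -> pim s2 = pim w -> MK (F `|` [fset x; w]).
Proof.
move=> hF xS wS s1S s2S s1n s2n e1 e2; apply: MK_add => //.
  by apply/fsubsetP => z; rewrite in_fset2 => /orP[]/eqP->.
move=> t; rewrite in_fset2 => /orP[]/eqP->.
  by exists s1 => //; rewrite in_fsetD s1n s1S.
by exists s2 => //; rewrite in_fsetD s2n s2S.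
Qed.

Lemma MK_type F : MK F -> #|` F| = n.-1 ->
  nfacets_containing n MK F 3 \/ nfacets_containing n MK F 4.
Proof.
move=> hF cF; have [_ sF hs] := hF.
have cS : #|` (Wm `\` F)| = (#|` Am|).+2 by rewrite cardWD // cardW cF; move: hn; lia.
have : #|` Am| < #|` (Wm `\` F)| by rewrite cS.
case/pigeon; first exact: fsubsetDl.
move=> a [a' [aS a'S aa e1]].
have hs1 := surj_rm hs aS a'S aa e1.
have : #|` Am| < #|` (Wm `\` F `\ a)|.
  by move: cS; rewrite (fcardD1 aS) => -[->].
case/pigeon; first by apply: fsubset_trans (fsubsetDl _ _) (fsubsetDl _ _).
move=> b [b' [bS1 b'S1 bb e2]].
have [ba bS] : b != a /\ b \in Wm `\` F by move: bS1; rewrite in_fsetD1 => /andP.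
have [b'a b'S] : b' != a /\ b' \in Wm `\` F by move: b'S1; rewrite in_fsetD1 => /andP.
have nF x : x \in Wm `\` F -> x \notin F by rewrite inWF => /andP[].
have cF2 x w : x \in Wm `\` F -> w \in Wm `\` F -> x != w ->
    #|` (F `|` [fset x; w])| = n.+1.
  by move=> xS wS xw; rewrite card_add2 ?nF // cF; move: hn; lia.
have sub2 x w : F `<=` F `|` [fset x; w] by apply: fsubsetUl.
have Gcard G : facet n MK G -> #|` G| = (#|` F|).+2 by move=> [_ ->]; rewrite cF; move: hn; lia.
have nc G x w : facet n MK G -> F `<=` G -> x \in Wm `\` F -> w \in Wm `\` F -> x != w ->
    pim x = pim w -> x \in G \/ w \in G.
  move=> fG sFG xS wS xw e; case: (boolP (x \in G)) => xG; first by left.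
  case: (boolP (w \in G)) => wG; first by right.
  exfalso; apply: (no_coll fG _ _ xw e); rewrite inWF ?xG ?wG ?andbT.
    by move: xS; rewrite inWF => /andP[].
  by move: wS; rewrite inWF => /andP[].
have mem2 x w y : y \in F `|` [fset x; w] = (y \in F) || (y == x) || (y == w).
  by rewrite !inE orbA.
case: (pim b =P pim a) => [e3|/eqP e3].
- (* three in one piece: a, b, b' *)
  left.
  have bb'a : pim b' = pim a by rewrite -e2.
  pose s := [:: F `|` [fset a; b]; F `|` [fset a; b']; F `|` [fset b; b']].
  have -> : 3 = size s by [].
  have aF := nF _ aS; have bF := nF _ bS; have b'F := nF _ b'S.
  have ab : a != b by rewrite eq_sym.
  have ab' : a != b' by rewrite eq_sym.
  apply: nf_list.
    rewrite /s /= !inE !negb_or !andbT; apply/andP; split; [apply/andP; split|].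
    + apply: (@neq_mem' _ _ _ b'); rewrite mem2; bsolve; bfin.
    + apply: (@neq_mem' _ _ _ b'); rewrite mem2; bsolve; bfin.
    + apply: (@neq_mem _ _ _ a); rewrite mem2; bsolve; bfin.
  move=> G; split.
    rewrite /s !inE => /orP[/eqP->|/orP[/eqP->|/eqP->]]; (split; last exact: sub2);
      split; rewrite ?cF2 //; try (rewrite eq_sym; done).
    + by apply: (MK_add2 hF aS bS b'S b'S _ _ bb'a (esym e2)); rewrite in_fset2; bsolve; bfin.
    + by apply: (MK_add2 hF aS b'S bS bS _ _ e3 e2); rewrite in_fset2; bsolve; bfin.
    + by apply: (MK_add2 hF bS b'S aS aS _ _ (esym e3) (esym bb'a)); rewrite in_fset2; bsolve; bfin.
  move=> [fG sFG]; have cG := Gcard G fG; rewrite /s !inE.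
  have [aG|bG] := nc G a b fG sFG aS bS (eq_sym_neq ba) (esym e3).
    have [bG|b'G] := nc G b b' fG sFG bS b'S bb e2.
      by rewrite (eq_add2 cG sFG aG bG) ?nF // eq_sym ?ba // eqxx.
    by rewrite (eq_add2 cG sFG aG b'G) ?nF // ?(eq_sym a) ?b'a // eqxx orbT.
  have [aG|b'G] := nc G a b' fG sFG aS b'S (eq_sym_neq b'a) (esym bb'a).
    by rewrite (eq_add2 cG sFG aG bG) ?nF // eq_sym ?ba // eqxx.
  by rewrite (eq_add2 cG sFG bG b'G) ?nF // eqxx !orbT.
- right.
  have aF := nF _ aS; have a'F := nF _ a'S; have bF := nF _ bS; have b'F := nF _ b'S.
  have ba' : b != a' by apply: (contraNneq _ e3) => ->; rewrite e1.
  have b'a' : b' != a' by apply: (contraNneq _ e3) => e; rewrite e2 e e1.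
  pose s := [:: F `|` [fset a; b]; F `|` [fset a; b']; F `|` [fset a'; b]; F `|` [fset a'; b']].
  have -> : 4 = size s by [].
  apply: nf_list.
    rewrite /s /= !inE !negb_or !andbT; repeat (apply/andP; split).
    + by apply: (@neq_mem' _ _ _ b'); rewrite mem2; bsolve; bfin.
    + by apply: (@neq_mem' _ _ _ a'); rewrite mem2; bsolve; bfin.
    + by apply: (@neq_mem' _ _ _ a'); rewrite mem2; bsolve; bfin.
    + by apply: (@neq_mem' _ _ _ a'); rewrite mem2; bsolve; bfin.
    + by apply: (@neq_mem' _ _ _ a'); rewrite mem2; bsolve; bfin.
    + by apply: (@neq_mem' _ _ _ b'); rewrite mem2; bsolve; bfin.
  move=> G; split.
    rewrite /s !inE => /orP[/eqP->|/orP[/eqP->|/orP[/eqP->|/eqP->]]]; (split; last exact: sub2);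
      (split; [|rewrite cF2 //; bsolve; bfin]).
    + by apply: (MK_add2 hF aS bS a'S b'S _ _ (esym e1) (esym e2)); rewrite in_fset2; bsolve; bfin.
    + by apply: (MK_add2 hF aS b'S a'S bS _ _ (esym e1) e2); rewrite in_fset2; bsolve; bfin.
    + by apply: (MK_add2 hF a'S bS aS b'S _ _ e1 (esym e2)); rewrite in_fset2; bsolve; bfin.
    + by apply: (MK_add2 hF a'S b'S aS bS _ _ e1 e2); rewrite in_fset2; bsolve; bfin.
  move=> [fG sFG]; have cG := Gcard G fG; rewrite /s !inE.
  have [aG|a'G] := nc G a a' fG sFG aS a'S aa e1;
  have [bG|b'G] := nc G b b' fG sFG bS b'S bb e2.
  + by rewrite (eq_add2 cG sFG aG bG) // ?eqxx // eq_sym.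
  + by rewrite (eq_add2 cG sFG aG b'G) // ?eqxx ?orbT // eq_sym.
  + by rewrite (eq_add2 cG sFG a'G bG) // ?eqxx ?orbT // eq_sym.
  + by rewrite (eq_add2 cG sFG a'G b'G) // ?eqxx ?orbT // eq_sym.
Qed.


Lemma MK_type34 : type34 n MK.
Proof. split; [split; [exact: MK_cx | exact: MK_closed] | exact: MK_type]. Qed.

Lemma DW : Dl `<=` Wm. Proof. exact: fsubsetUl. Qed.
Lemma AW : Am `<=` Wm. Proof. exact: fsubsetUr. Qed.

Lemma MK_Delta : facet n MK Dl.
Proof.
split; last exact: cardDl.
split; last 1 first.
- apply/fsubsetP => a aA; apply/imfsetP; exists a; last by rewrite pim_A.
  by rewrite in_fsetD (AnD aA) (fsubsetP AW).
- by rewrite -cardfs_gt0 cardDl.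
- exact: DW.
Qed.

Lemma Xm_in v : v \in Dl -> Xm v \in Am.
Proof. by move=> vD; rewrite in_imfset. Qed.

Lemma opp_Delta v : v \in Dl -> opp n MK Dl v = Xm v.
Proof.
move=> vD; symmetry; apply: (opp_uniq hn MK_type34 MK_Delta vD (XnD v)).
have XA := Xm_in vD.
have vX : v != Xm v by apply: contraNneq (XnD v) => <-.
split; last by rewrite card_addx ?in_fsetD1 ?(negbTE (XnD v)) ?andbF // -(fcardD1 vD) cardDl.
split.
- by apply/fset0Pn; exists (Xm v); rewrite in_fsetU in_fset1 eqxx orbT.
- rewrite fsubUset fsub1set (fsubsetP AW) // andbT.
  by apply: fsubset_trans (fsubsetDl _ _) DW.
apply/fsubsetP => a aA; apply/imfsetP.
case: (a =P Xm v) => [->|/eqP aX].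
  exists v; last by rewrite /pim vD.
  by rewrite in_fsetD in_fsetU in_fset1 in_fsetD1 eqxx (fsubsetP DW) // (negbTE vX).
exists a; last by rewrite pim_A.
by rewrite in_fsetD in_fsetU in_fset1 in_fsetD1 (negbTE (AnD aA)) (negbTE aX) andbF (fsubsetP AW).
Qed.


Lemma reach k G : #|` (G `\` Dl)| = k -> facet n MK G ->
  clos_refl_trans {fset nat} (adjacent n MK) G Dl.
Proof.
elim: k G => [|k IH] G cG fG.
  have sGD : G `<=` Dl.
    apply/fsubsetP => z zG; apply: contraT => zD.
    by move/cardfs0_eq: cG => /fsetP /(_ z); rewrite in_fsetD zD zG in_fset0.
  have -> : G = Dl by apply: fsub_eq sGD _; rewrite cardDl fG.2.
  exact: rt_refl.
have : G `\` Dl != fset0 by rewrite -cardfs_gt0 cG.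
case/fset0Pn => a; rewrite in_fsetD => /andP[aD aG].
have [[_ sG hs] cG'] := fG.
have aA : a \in Am by move: (fsubsetP sG _ aG); rewrite in_fsetU (negbTE aD).
case/imfsetP: (fsubsetP hs _ aA) => u /=; rewrite in_fsetD => /andP[uG uW] eu.
have ua : u != a by apply: contraNneq uG => ->.
have uD : u \in Dl.
  apply: contraT => uD; move: eu; rewrite /pim (negbTE uD) => eu.
  by rewrite eu eqxx in ua.
pose G' := G `\ a `|` [fset u].
have uGa : u \notin G `\ a by rewrite in_fsetD1 (negbTE uG) andbF.
have fG' : facet n MK G'.
  split; last by rewrite card_addx // -(fcardD1 aG) cG'.
  split.
  - by apply/fset0Pn; exists u; rewrite in_fsetU in_fset1 eqxx orbT.
  - rewrite fsubUset fsub1set (fsubsetP DW) // andbT.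
    by apply: fsubset_trans (fsubsetDl _ _) sG.
  apply/fsubsetP => b /(fsubsetP hs) /imfsetP [z /=]; rewrite in_fsetD => /andP[zG zW] ->.
  case: (z =P u) => [->|/eqP zu].
    apply/imfsetP; exists a; last by rewrite -eu pim_A.
    by rewrite in_fsetD in_fsetU in_fsetD1 in_fset1 eqxx eq_sym (negbTE ua) /= (fsubsetP AW).
  by apply/imfsetP; exists z => //; rewrite in_fsetD in_fsetU in_fsetD1 in_fset1 (negbTE zG) (negbTE zu) andbF zW.
have adj : adjacent n MK G G'.
  split=> //; split=> //.
  have -> : G `&` G' = G `\ a.
    apply/fsetP => z; rewrite in_fsetI in_fsetU in_fset1 !in_fsetD1.
    case: (z =P u) => [->|_]; first by rewrite (negbTE uG) andbF.
    by rewrite orbF; case: (z \in G); case: (z == a).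
  by move: cG'; rewrite (fcardD1 aG) => -[].
apply: rt_trans (rt_step _ _ _ _ adj) (IH _ _ fG').
have -> : G' `\` Dl = (G `\` Dl) `\ a.
  apply/fsetP => z; rewrite in_fsetD1 !in_fsetD in_fsetU in_fset1 in_fsetD1.
  case: (z =P u) => [->|_]; first by rewrite uD /= andbF.
  by rewrite orbF; case: (z \in Dl); case: (z == a); case: (z \in G).
by move: cG; rewrite (@fcardD1 _ (G `\` Dl) a) ?in_fsetD ?aD ?aG // => -[].
Qed.

Lemma crt_sym (T : Type) (R : T -> T -> Prop) x y : (forall a b, R a b -> R b a) ->
  clos_refl_trans T R x y -> clos_refl_trans T R y x.
Proof.
move=> hs; elim=> {x y} [x y r|x|x y z _ h1 _ h2].
- by apply: rt_step; apply: hs.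
- exact: rt_refl.
- exact: rt_trans h2 h1.
Qed.

Lemma MK_sc : strongly_connected n MK.
Proof.
move=> G H fG fH; apply: rt_trans (reach (erefl _) fG) _.
apply: crt_sym (reach (erefl _) fH).
by move=> a b [fa [fb c]]; split=> //; split=> //; rewrite fsetIC.
Qed.


Definition bl v := nth fset0 P (blk v).

Lemma blk_lt v : v \in Dl -> blk v < size P /\ v \in bl v.
Proof.
move=> vD; have [_ _ cov] := HP; have [B BP vB] := (cov v).1 vD.
have hh : has (fun B : {fset nat} => v \in B) P by apply/hasP; exists B.
by split; [rewrite -has_find | exact: (nth_find fset0 hh)].
Qed.

Lemma bl_in v : v \in Dl -> bl v \in P.
Proof. by move=> vD; apply: mem_nth; case: (blk_lt vD). Qed.

Lemma blk_eq v w : v \in Dl -> w \in Dl -> (blk v = blk w) <-> w \in bl v.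
Proof.
move=> vD wD; have [_ wbw] := blk_lt wD; split; first by rewrite /bl => ->.
move=> wbv; have [_ dis _] := HP.
have e : bl v = bl w.
  apply: NNPP => ne; have := dis _ _ (bl_in vD) (bl_in wD) (introN eqP ne).
  by move/fsetP/(_ w); rewrite in_fsetI wbv wbw in_fset0.
apply/eqP; rewrite -(nth_uniq fset0 (blk_lt vD).1 (blk_lt wD).1 (fset_uniq P)).
by rewrite -/(bl v) -/(bl w) e.
Qed.

Lemma MK_char : is_char_partition n MK Dl P.
Proof.
have HK := MK_type34.
have cr v w : v \in Dl -> w \in Dl -> char_rel n MK Dl v w <-> w \in bl v.
  move=> vD wD; rewrite (char_iff hn HK MK_Delta vD wD) !opp_Delta // -blk_eq //.
  by rewrite /Xm; split=> [/eqP|->//]; rewrite eqn_add2l => /eqP.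
have [nB _ cov] := HP.
have blD v w : v \in Dl -> w \in bl v -> w \in Dl.
  by move=> vD wb; apply/(cov w).2; exists (bl v) => //; apply: bl_in.
move=> B; split.
  move=> BP; have /fset0Pn [v vB] := nB _ BP.
  have vD : v \in Dl by apply/(cov v).2; exists B.
  have eB : B = bl v.
    have [_ dis _] := HP; apply: NNPP => ne.
    have := dis _ _ BP (bl_in vD) (introN eqP ne).
    by move/fsetP/(_ v); rewrite in_fsetI vB (blk_lt vD).2 in_fset0.
  exists v => // w; rewrite eB; split.
    by move=> wb; have wD := blD _ _ vD wb; split=> //; apply/(cr _ _ vD wD).
  by move=> [wD /(cr _ _ vD wD)].
move=> [v vD hv]; have -> : B = bl v.
  apply/fsetP => w; apply/idP/idP.
    by move=> /hv [wD /(cr _ _ vD wD)].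
  by move=> wb; have wD := blD _ _ vD wb; apply/hv; split=> //; apply/(cr _ _ vD wD).
exact: bl_in.
Qed.

End Model.


Theorem lemma2p1 (n : nat) (hn : 2 <= n) :
  (forall P : {fset {fset nat}}, is_partition (Delta n) P ->
     exists K : {fset nat} -> Prop,
       [/\ scc34 n K, facet n K (Delta n) & is_char_partition n K (Delta n) P])
  /\
  (forall (P : {fset {fset nat}}) (K1 K2 : {fset nat} -> Prop),
     is_partition (Delta n) P ->
     scc34 n K1 -> facet n K1 (Delta n) -> is_char_partition n K1 (Delta n) P ->
     scc34 n K2 -> facet n K2 (Delta n) -> is_char_partition n K2 (Delta n) P ->
     exists f : nat -> nat,
       complex_iso K1 K2 f /\ (forall i, i \in Delta n -> f i = i))
  /\
  (forall (V : choiceType) (K : {fset V} -> Prop) (D1 D2 : {fset V})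
          (P1 P2 : {fset {fset V}}),
     scc34 n K -> facet n K D1 -> facet n K D2 ->
     is_char_partition n K D1 P1 -> is_char_partition n K D2 P2 ->
     perm_eq [seq #|` B| | B <- P1] [seq #|` B| | B <- P2]).
Proof.
split; [|split].
- move=> P HP; exists (MK n P); split.
  + split; [exact: MK_type34 | exact: MK_sc].
  + exact: MK_Delta.
  + exact: MK_char.
- move=> P K1 K2 _ s1 f1 c1 s2 f2 c2. by have [f hf] := part2_gen hn s1 f1 c1 s2 f2 c2; exists f.
- move=> V K D1 D2 P1 P2 [HK SC] f1 f2 c1 c2; by have := part3_gen hn HK SC f1 f2 c1 c2.
Qed.
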